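(* Assume (A4) holds at $\bar u_{\bar e}$ and that there is $\sigma>0$ with $\beta+\bar e_\beta-(\alpha+\bar e_\alpha)\ge\sigma$ a.e. on $\Omega$. Take $0<\eta<\sigma/4$. Let $e\in B_\eta(\bar e)$ and let $\bar u_e\in\mathcal U_{ad}(e)$ satisfy the perturbed first-order optimality system, i.e. $\int_\Omega\varphi_{\bar u_e,e}(u-\bar u_e)dx\ge0$ for all $u\in\mathcal U_{ad}(e)$. Then there exist constants $c>0$, $\kappa'>0$ independent of $e$, and a control $u_e\in\mathcal U_{ad}(\bar e)$ with $\|\bar u_e-u_e\|_{L^\infty(\Omega)}\le\|e-\bar e\|_E$, such that $(\mathcal J'_u(\bar u_e,e)-\mathcal J'_u(\bar u_{\bar e},\bar e))(\bar u_{\bar e}-\bar u_e)\ge\kappa'\|\bar u_e-\bar u_{\bar e}\|_{L^1(\Omega)}^{1+1/\varkappa}+\frac12\mathcal J'_u(\bar u_{\bar e},\bar e)(u_e-\bar u_{\bar e})-c\big(\|e-\bar e\|_E^{1/\varkappa}+\|\varphi_{\bar u_e,e}-\varphi_{\bar u_{\bar e},\bar e}\|_{L^\infty(\Omega)}+\|\bar u_e-\bar u_{\bar e}\|_{L^1(\Omega)}\big)\|e-\bar e\|_E$.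
   Context: Let $\Omega\subset\mathbb R^N$, $N\in\{1,2,3\}$, be an open bounded domain with Lipschitz boundary $\Gamma$; $\alpha,\beta\in L^\infty(\Omega)$, $\alpha\le\beta$. $Ay=-\sum_{i,j}\partial_{x_j}(a_{ij}\partial_{x_i}y)$, $a_{ij}\in C(\bar\Omega)$ uniformly elliptic. $L,f$ Carathéodory, $C^2$ in $y$, satisfying (A1) $f(\cdot,0)\in L^{\bar p}$, $\bar p>N/2$, $\partial f/\partial y\ge0$, $|\partial f/\partial y|+|\partial^2f/\partial y^2|\le C_{f,M}$ for $|y|\le M$, $\partial^2f/\partial y^2(x,\cdot)$ uniformly continuous on $[-M,M]$ uniformly in $x$; (A2) $L(\cdot,0)\in L^1$, $|\partial L/\partial y|\le\psi_M\in L^{\bar p}$, $|\partial^2L/\partial y^2|\le C_{L,M}$ for $|y|\le M$, $\partial^2L/\partial y^2(x,\cdot)$ uniformly continuous likewise. $y_u$ solves $Ay+f(x,y)=u$, $y=0$ on $\Gamma$; $J(u)=\int_\Omega L(x,y_u)dx$. $E=L^2(\Omega)^2\times L^\infty(\Omega)^2$, $e=(e_y,e_J,e_\alpha,e_\beta)$ with the sum norm; $\mathcal U_{ad}(e)=\{u\in L^1:\alpha+e_\alpha\le u\le\beta+e_\beta\text{ a.e.}\}$; $\mathcal J(u,e)=J(u+e_y)+(e_J,y_{u+e_y})_{L^2}$. $\varphi_{u,e}$ solves $A^*\varphi+\frac{\partial f}{\partial y}(x,y_{u+e_y})\varphi=\frac{\partial L}{\partial y}(x,y_{u+e_y})+e_J$,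 $\varphi=0$ on $\Gamma$, so that $\mathcal J'_u(u,e)v=\int_\Omega\varphi_{u,e}v\,dx$. (A4) at $\bar u_{\bar e}$: $\bar u_{\bar e}\in\mathcal U_{ad}(\bar e)$, with adjoint state $\varphi_{\bar u_{\bar e}}$ (solution of $A^*\varphi+\frac{\partial f}{\partial y}(x,y_{\bar u_{\bar e}})\varphi=\frac{\partial L}{\partial y}(x,y_{\bar u_{\bar e}})$, $\varphi=0$ on $\Gamma$), satisfies $\int_\Omega\varphi_{\bar u_{\bar e}}(u-\bar u_{\bar e})\ge0$ for all $u\in\mathcal U_{ad}(\bar e)$ and there are $K,\varkappa>0$ with $|\{x:|\varphi_{\bar u_{\bar e}}(x)|\le\varepsilon\}|\le K\varepsilon^\varkappa$ for all $\varepsilon>0$. *)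

(* Defs.v *)
From HB Require Import structures.
From mathcomp Require Import all_boot all_order all_algebra.
From mathcomp Require Import all_classical all_reals all_analysis.
Set Implicit Arguments. Unset Strict Implicit. Unset Printing Implicit Defensive.
Import Order.TTheory GRing.Theory Num.Theory.
Import numFieldNormedType.Exports.
Local Open Scope classical_set_scope.
Local Open Scope ring_scope.

Section Defs.
Context (d : measure_display) (T : measurableType d) (R : realType)
  (mu : {measure set T -> \bar R}) (Om : set T).

Definition Linf (f : T -> R) : R :=
  fine (ereal_inf [set y : \bar R | {ae mu, forall x, Om x -> ((`|f x|)%:E <= y)%E}]).

Definition in_Linf (f : T -> R) : Prop :=
  measurable_fun Om f /\ exists M : R, {ae mu, forall x, Om x -> `|f x| <= M}.

Definition L1norm (f : T -> R) : R := fine (\int[mu]_(x in Om) (`|f x|)%:E)%E.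

Definition L2norm (f : T -> R) : R :=
  Num.sqrt (fine (\int[mu]_(x in Om) ((f x) ^+ 2)%:E)%E).

Definition in_L2 (f : T -> R) : Prop :=
  measurable_fun Om f /\ (\int[mu]_(x in Om) ((f x) ^+ 2)%:E < +oo)%E.

Record pert := Pert { e_y : T -> R; e_J : T -> R; e_al : T -> R; e_be : T -> R }.

Definition in_E (e : pert) : Prop :=
  [/\ in_L2 (e_y e), in_L2 (e_J e), in_Linf (e_al e) & in_Linf (e_be e)].

Definition Edist (e e' : pert) : R :=
  L2norm (e_y e \- e_y e') + L2norm (e_J e \- e_J e')
  + Linf (e_al e \- e_al e') + Linf (e_be e \- e_be e').

Definition Uad (al be : T -> R) (e : pert) : set (T -> R) :=
  [set u | mu.-integrable Om (EFin \o u) /\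
     {ae mu, forall x, Om x -> al x + e_al e x <= u x <= be x + e_be e x}].

End Defs.

(* Main.v *)
Set Warnings "-all".
Set Implicit Arguments. Unset Strict Implicit. Unset Printing Implicit Defensive.
Require Import Defs.
From HB Require Import structures.
From mathcomp Require Import all_boot all_order all_algebra.
From mathcomp Require Import all_classical all_reals all_analysis.
From mathcomp Require Import measurable_realfun.
From mathcomp Require Import lra.
Import Order.TTheory GRing.Theory Num.Theory.
Import numFieldNormedType.Exports.
Local Open Scope classical_set_scope.
Local Open Scope ring_scope.

Section Helpers.
Context (d : measure_display) (T : measurableType d) (R : realType)
  (mu : {measure set T -> \bar R}) (Om : set T).

Lemma ae_notOm (f : T -> R) (y : \bar R) :
  {ae mu, forall x, Om x -> (`|f x|%:E <= y)%E} -> (y < 0)%E ->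
  {ae mu, forall x, ~ Om x}.
Proof.
move=> H y0; apply: filterS H => x H Ox.
have := H Ox => /le_lt_trans/(_ y0); rewrite lte_fin ltNge normr_ge0 //.
Qed.

Lemma Linf_ae (f : T -> R) :
  (exists M, {ae mu, forall x, Om x -> `|f x| <= M}) ->
  0 <= Linf mu Om f /\ {ae mu, forall x, Om x -> `|f x| <= Linf mu Om f}.
Proof.
move=> [M HM].
set S := [set y : \bar R | {ae mu, forall x, Om x -> (`|f x|%:E <= y)%E}].
have SM : S M%:E by apply: filterS HM => x H Ox; rewrite lee_fin H.
have neg : forall y, S y -> (y < 0)%E -> 
   0 <= Linf mu Om f /\ {ae mu, forall x, Om x -> `|f x| <= Linf mu Om f}.
  move=> y Sy y0.
  have nO := @ae_notOm f y Sy y0.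
  have Sinf : S (-oo)%E by apply: filterS nO => x H /H.
  have -> : Linf mu Om f = 0.
    rewrite /Linf; have : (ereal_inf S <= (-oo)%E)%E by apply: ereal_inf_lbound.
    by rewrite leeNy_eq => /eqP ->.
  by split => //; apply: filterS nO => x H /H.
rewrite /Linf -/S.
case E: (ereal_inf S) => [r| |].
- have Sr : ereal_inf S \is a fin_num by rewrite E.
  have [r0|r0] := leP 0 r; last first.
    have : (ereal_inf S < 0)%E by rewrite E lte_fin.
    move/ereal_inf_lt => [y Sy y0]; have := neg y Sy y0; rewrite /Linf -/S E.
    by case=> /=; rewrite leNgt r0.
  split => //=.
  have : {ae mu, forall x, forall n : nat, Om x -> `|f x| <= r + (n.+1%:R)^-1}.
    apply: ae_foralln => n.
    have e0 : 0 < n.+1%:R^-1 :> R by rewrite invr_gt0.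
    have [y Sy yl] := lb_ereal_inf_adherent e0 Sr.
    apply: filterS Sy => x H Ox.
    rewrite -lee_fin EFinD -E; apply: le_trans (ltW yl); exact: H.
  apply: filterS => x H Ox; rewrite leNgt; apply/negP => /ltr_add_invr [k Hk].
  by have := H k Ox; rewrite leNgt Hk.
- have : (ereal_inf S <= M%:E)%E by apply: ereal_inf_lbound.
  by rewrite E leye_eq.
- have : (ereal_inf S < 0)%E by rewrite E.
  move/ereal_inf_lt => [y Sy y0]; have := neg y Sy y0; rewrite /Linf -/S E.
  by [].
Qed.


Lemma inL_int (mOm : measurable Om) (fin : (mu Om < +oo)%E) (f : T -> R) :
  in_Linf mu Om f -> mu.-integrable Om (EFin \o f).
Proof.
move=> [mf [M HM]]; apply/integrableP; split; first exact/measurable_EFinP.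
apply: le_lt_trans.
  apply: (integral_le_bound (`|M|%:E)) => //; first exact/measurable_EFinP.
  apply: filterS HM => x H Ox /=; rewrite lee_fin (le_trans (H Ox))// ler_norm //.
by rewrite lte_mul_pinfty.
Qed.

Lemma inL_D (f g : T -> R) : in_Linf mu Om f -> in_Linf mu Om g ->
  in_Linf mu Om (fun x => f x + g x).
Proof.
move=> [mf [M HM]] [mg [N HN]]; split; first exact: (measurable_funD mf mg).
exists (M + N); apply: filterS2 HM HN => x H1 H2 Ox.
by rewrite (le_trans (ler_normD _ _))// lerD ?H1 ?H2.
Qed.

Lemma inL_N (f : T -> R) : in_Linf mu Om f -> in_Linf mu Om (fun x => - f x).
Proof.
move=> [mf [M HM]]; split; first exact: (measurable_funN mf).
by exists M; apply: filterS HM => x H Ox; rewrite normrN H.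
Qed.

Lemma inL_B (f g : T -> R) : in_Linf mu Om f -> in_Linf mu Om g ->
  in_Linf mu Om (fun x => f x - g x).
Proof. by move=> hf hg; apply: inL_D => //; exact: inL_N. Qed.

Lemma inL_M (f g : T -> R) : in_Linf mu Om f -> in_Linf mu Om g ->
  in_Linf mu Om (fun x => f x * g x).
Proof.
move=> [mf [M HM]] [mg [N HN]]; split; first exact: (measurable_funM mf mg).
exists (`|M| * `|N|); apply: filterS2 HM HN => x H1 H2 Ox.
rewrite normrM ler_pM //; apply: le_trans (ler_norm _); [exact: H1|exact: H2].
Qed.

Lemma inL_cst (c : R) : in_Linf mu Om (fun _ => c).
Proof. split; first exact: measurable_cst. by exists `|c|; apply: aeW. Qed.

Lemma inL_max (f g : T -> R) : in_Linf mu Om f -> in_Linf mu Om g ->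
  in_Linf mu Om (fun x => Num.max (f x) (g x)).
Proof.
move=> [mf [M HM]] [mg [N HN]]; split; first exact: (measurable_maxr mf mg).
exists (M + N); apply: filterS2 HM HN => x H1 H2 Ox.
have := H1 Ox; have := H2 Ox; have := normr_ge0 (f x); have := normr_ge0 (g x).
case: (leP (f x) (g x)) => _ *; lra.
Qed.

Lemma inL_min (f g : T -> R) : in_Linf mu Om f -> in_Linf mu Om g ->
  in_Linf mu Om (fun x => Num.min (f x) (g x)).
Proof.
move=> [mf [M HM]] [mg [N HN]]; split; first exact: (measurable_minr mf mg).
exists (M + N); apply: filterS2 HM HN => x H1 H2 Ox.
have := H1 Ox; have := H2 Ox; have := normr_ge0 (f x); have := normr_ge0 (g x).
case: (leP (f x) (g x)) => _ *; lra.
Qed.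

Lemma inL_sand (f g h : T -> R) : measurable_fun Om f ->
  in_Linf mu Om g -> in_Linf mu Om h ->
  {ae mu, forall x, Om x -> g x <= f x <= h x} -> in_Linf mu Om f.
Proof.
move=> mf [_ [M HM]] [_ [N HN]] H; split => //.
exists (M + N); apply: filterS3 HM HN H => x H1 H2 H3 Ox.
have := H1 Ox; have := H2 Ox; have /andP[] := H3 Ox.
rewrite !real_ler_norml ?num_real // => *; apply/andP; split; lra.
Qed.


Lemma ae_le_Rint (mOm : measurable Om) (fin : (mu Om < +oo)%E) (f g : T -> R) :
  in_Linf mu Om f -> in_Linf mu Om g ->
  {ae mu, forall x, Om x -> f x <= g x} ->
  Rintegral mu Om f <= Rintegral mu Om g.
Proof.
move=> hf hg H.
have hgf := inL_B hg hf.
have : 0 <= Rintegral mu Om (fun x => g x - f x).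
  have mgf := hgf.1.
  have mmax : measurable_fun Om (fun x => Num.max (g x - f x) 0).
    exact: (measurable_maxr mgf (measurable_cst (0:R))).
  rewrite /Rintegral (ae_eq_integral (fun x => (Num.max (g x - f x) 0)%:E)) //.
  - by rewrite fine_ge0 // integral_ge0 // => x _; rewrite lee_fin le_max lexx orbT.
  - exact/measurable_EFinP.
  - exact/measurable_EFinP.
  - apply: filterS H => x H Ox; congr (_%:E).
    by have := H Ox; rewrite -subr_ge0 => h; rewrite max_l.
rewrite RintegralB //; [by rewrite subr_ge0| exact: inL_int |exact: inL_int].
Qed.

Lemma ae_zero_Rint (mOm : measurable Om) (fin : (mu Om < +oo)%E) (f : T -> R) :
  in_Linf mu Om f -> {ae mu, forall x, Om x -> f x <= 0} ->
  0 <= Rintegral mu Om f -> {ae mu, forall x, Om x -> f x = 0}.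
Proof.
move=> hf H I.
have hN : in_Linf mu Om (fun x => (-1) * f x) by apply: inL_M => //; exact: inL_cst.
have hA : in_Linf mu Om (fun x => `|f x|).
  apply: (inL_sand (g := fun x => f x) (h := fun x => (-1) * f x)) => //.
    by apply: measurableT_comp => //; exact: hf.1.
  apply: filterS H => x H Ox; have := H Ox => h.
  by rewrite ler0_norm // mulN1r lexx andbT; lra.
have : Rintegral mu Om (fun x => `|f x|) <= Rintegral mu Om (fun x => (-1) * f x).
  apply: ae_le_Rint => //; apply: filterS H => x H Ox.
  by rewrite ler0_norm ?H // mulN1r.
rewrite RintegralZl //; last exact: inL_int.
move=> le0.
have e0 : Rintegral mu Om (fun x => `|f x|) = 0.
  apply/eqP; rewrite eq_le; apply/andP; split; last first.
    by apply: Rintegral_ge0 => x _.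
  by apply: le_trans le0 _; rewrite mulN1r oppr_le0.
have : (\int[mu]_(x in Om) `|(EFin \o f) x| = 0)%E.
  have := inL_int mOm fin hA => /integrableP [_ fi].
  rewrite /Rintegral in e0.
  have fn : (\int[mu]_(x in Om) (`|f x|)%:E)%E \is a fin_num.
    rewrite ge0_fin_numE //; last by apply: integral_ge0.
    by move: fi; under eq_integral do rewrite /= normr_id.
  by rewrite -(fineK fn) e0.
have mF : measurable_fun Om (EFin \o f) by apply/measurable_EFinP; exact: hf.1.
move/(ae_eq_integral_abs mu mOm mF) => /= ae0.
by apply: filterS ae0 => x Hx Ox; have := Hx Ox => [[]].
Qed.


Lemma inL_if (mOm : measurable Om) (P : T -> bool) (g h : T -> R) :
  measurable_fun Om P -> in_Linf mu Om g -> in_Linf mu Om h ->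
  in_Linf mu Om (fun x => if P x then g x else h x).
Proof.
move=> mP [mg [M HM]] [mh [N HN]]; split.
  apply: measurable_fun_if => //.
  - apply: measurable_funS mg => //; exact: subIsetl.
  - apply: measurable_funS mh => //; exact: subIsetl.
exists (`|M| + `|N|); apply: filterS2 HM HN => x H1 H2 Ox.
have := H1 Ox; have := H2 Ox; have := ler_norm M; have := ler_norm N.
have := normr_ge0 M; have := normr_ge0 N.
case: (P x) => *; lra.
Qed.

Lemma VI_pw (mOm : measurable Om) (fin : (mu Om < +oo)%E) (a b u p : T -> R) :
  in_Linf mu Om a -> in_Linf mu Om b -> in_Linf mu Om p -> measurable_fun Om u ->
  {ae mu, forall x, Om x -> a x <= u x <= b x} ->
  (forall z, in_Linf mu Om z -> {ae mu, forall x, Om x -> a x <= z x <= b x} ->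
     0 <= Rintegral mu Om (fun x => p x * (z x - u x))) ->
  {ae mu, forall x, Om x -> (0 < p x -> u x = a x) /\ (p x < 0 -> u x = b x)}.
Proof.
move=> ha hb hp mu_ hu VI.
have hU : in_Linf mu Om u by apply: (inL_sand mu_ ha hb hu).
have mpos : measurable_fun Om (fun x => 0 < p x).
  exact: (measurable_fun_ltr (measurable_cst (0:R)) hp.1).
have mneg : measurable_fun Om (fun x => p x < 0).
  exact: (measurable_fun_ltr hp.1 (measurable_cst (0:R))).
set us := fun x => if 0 < p x then a x else if p x < 0 then b x else u x.
have hus : in_Linf mu Om us by apply: inL_if => //; apply: inL_if.
have box : {ae mu, forall x, Om x -> a x <= us x <= b x}.
  apply: filterS hu => x H Ox; have /andP[h1 h2] := H Ox; rewrite /us.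
  have ab := le_trans h1 h2.
  case: ifP => _; first by rewrite lexx ab.
  by case: ifP => _; [rewrite lexx ab|rewrite h1 h2].
have neg : {ae mu, forall x, Om x -> p x * (us x - u x) <= 0}.
  apply: filterS hu => x H Ox; have /andP[h1 h2] := H Ox; rewrite /us.
  case: ifP => h; first by rewrite pmulr_rle0 // subr_le0.
  case: ifP => h'; last by rewrite subrr mulr0.
  by rewrite nmulr_rle0 // subr_ge0.
have := ae_zero_Rint mOm fin (inL_M hp (inL_B hus hU)) neg (VI us hus box).
apply: filterS => x H Ox; have := H Ox; rewrite /us.
split => hh.
- move: H0; rewrite hh => /eqP; rewrite mulf_eq0 (gt_eqF hh) /= subr_eq0.
  by move/eqP.
- move: H0; rewrite ltNge (ltW hh) /= hh => /eqP; rewrite mulf_eq0 (lt_eqF hh) /= subr_eq0.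
  by move/eqP.
Qed.


Lemma growth (mOm : measurable Om) (fin : (mu Om < +oo)%E) (p v u : T -> R)
  (K kap Mb t : R) :
  in_Linf mu Om p -> in_Linf mu Om v -> in_Linf mu Om u -> 0 < t -> 0 <= Mb ->
  {ae mu, forall x, Om x -> `|p x| * `|v x - u x| <= p x * (v x - u x)
      /\ `|v x - u x| <= Mb} ->
  (mu [set x | Om x /\ (`|p x| <= t)%R] <= (K * powR t kap)%:E)%E ->
  t * Rintegral mu Om (fun x => `|v x - u x|) - t * Mb * (K * powR t kap)
    <= Rintegral mu Om (fun x => p x * (v x - u x)).
Proof.
move=> hp hv hu t0 Mb0 H HA.
set A := [set x | Om x /\ (`|p x| <= t)%R].
have mA : measurable A.
  have mP : measurable_fun Om (fun x => `|p x| <= t).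
    apply: (measurable_fun_ler _ (measurable_cst t)).
    by apply: measurableT_comp => //; exact: hp.1.
  rewrite (_ : A = Om `&` ((fun x => `|p x| <= t) @^-1` [set true])).
    exact: mP.
  by apply/seteqP; split => x /= [h1 h2]; split.
have hI : in_Linf mu Om (fun x => \1_A x).
  split; first exact: measurable_indic.
  by exists 1; apply: aeW => x _; rewrite indicE; case: (x \in A); rewrite ?normr1 ?normr0.
have hvu : in_Linf mu Om (fun x => `|v x - u x|).
  have [mvu [M HM]] := inL_B hv hu.
  split; first by apply: measurableT_comp => //.
  by exists M; apply: filterS HM => x h Ox; rewrite normr_id h.
have hL : in_Linf mu Om (fun x => t * `|v x - u x| - t * Mb * \1_A x).
  apply: inL_B; apply: inL_M => //; apply: inL_cst.
have : Rintegral mu Om (fun x => t * `|v x - u x| - t * Mb * \1_A x)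
        <= Rintegral mu Om (fun x => p x * (v x - u x)).
  apply: ae_le_Rint => //; first by apply: inL_M => //; exact: inL_B.
  apply: filterS H => x H Ox; have [h1 h2] := H Ox.
  rewrite indicE; case: (boolP (x \in A)) => xA.
  - rewrite mulr1; apply: le_trans h1.
    apply: le_trans (mulr_ge0 (normr_ge0 _) (normr_ge0 _)); rewrite subr_le0 ler_pM2l //.
  - rewrite mulr0 subr0; apply: le_trans h1; rewrite ler_wpM2r //.
    have : ~ A x by move=> Ax; move: xA; rewrite (mem_set Ax).
    by rewrite /A /= => nA; rewrite leNgt; apply/negP => /ltW h; apply: nA.
rewrite RintegralB //; [|apply: inL_int => //; apply: inL_M => //; apply: inL_cst
  |apply: inL_int => //; apply: inL_M => //; apply: inL_cst].
rewrite RintegralZl //; last exact: inL_int.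
rewrite RintegralZl //; last exact: inL_int.
move=> h; apply: le_trans h; rewrite lerD2l lerN2 ler_wpM2l //; first by rewrite mulr_ge0 // ltW.
have fA : mu A \is a fin_num.
  by rewrite ge0_fin_numE // (le_lt_trans HA) // ltry.
rewrite /Rintegral integral_indic // setIidl; last by move=> x [].
by rewrite -(fineK fA) in HA *; rewrite lee_fin in HA.
Qed.


Lemma Linf_le (f : T -> R) (c : R) : 0 <= c ->
  (forall x, Om x -> `|f x| <= c) -> Linf mu Om f <= c.
Proof.
move=> c0 H; rewrite /Linf.
set S := [set y : \bar R | {ae mu, forall x, Om x -> (`|f x|%:E <= y)%E}].
have Sc : S c%:E by apply: aeW => x Ox; rewrite lee_fin H.
have : (ereal_inf S <= c%:E)%E by apply: ereal_inf_lbound.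
by case: (ereal_inf S) => [r| |] //=; rewrite lee_fin.
Qed.

Lemma aeOm2 (P Q : T -> Prop) : {ae mu, forall x, Om x -> P x} ->
  {ae mu, forall x, Om x -> Q x} -> {ae mu, forall x, Om x -> P x /\ Q x}.
Proof. by move=> H1 H2; apply: filterS2 H1 H2 => x h1 h2 Ox; split; [exact: h1|exact: h2]. Qed.

Lemma inL_abs (f : T -> R) : in_Linf mu Om f -> in_Linf mu Om (fun x => `|f x|).
Proof.
move=> [mf [M HM]]; split; first by apply: measurableT_comp.
by exists M; apply: filterS HM => x h Ox; rewrite normr_id h.
Qed.

End Helpers.

Lemma pw_sign (R : realType) (p u v a b : R) : a <= v <= b ->
  (0 < p -> u = a) -> (p < 0 -> u = b) -> `|p| * `|v - u| <= p * (v - u).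
Proof.
move=> /andP[h1 h2] hp hn.
case: (ltgtP p 0) => h.
- rewrite (hn h) ltr0_norm // ler0_norm ?subr_le0 //; lra.
- rewrite (hp h) gtr0_norm // ger0_norm ?subr_ge0 //.
- by rewrite h normr0 !mul0r.
Qed.

Lemma clamp_abs (R : realType) (eps y : R) : 0 <= eps ->
  `|Num.max (- eps) (Num.min eps y)| <= eps.
Proof.
move=> e0; case: (leP eps y) => h1; case: (leP (- eps) _) => h2;
  rewrite ler_norml; apply/andP; split; lra.
Qed.

Lemma clamp_facts (R : realType) (a b a' b' u w eps : R) :
  a <= u <= b -> a' <= w <= b' -> `|a' - a| <= eps -> `|b' - b| <= eps ->
  let k := Num.max (- eps) (Num.min eps (u - w)) in
  [/\ a <= w + k <= b, a' <= u - k <= b' & `|k| <= eps].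
Proof.
move=> /andP[h1 h2] /andP[h3 h4]; rewrite !ler_norml => /andP[h5 h6] /andP[h7 h8] k.
have e0 : 0 <= eps by lra.
rewrite /k; case: (leP eps (u - w)) => h9.
  rewrite max_r; last lra.
  rewrite !ler_norml; split; apply/andP; split; lra.
case: (leP (- eps) (u - w)) => h10.
  rewrite !ler_norml; split; try apply/andP; try split; lra.
rewrite !ler_norml; split; try apply/andP; try split; lra.
Qed.


Lemma growth_pow (R : realType) (C1 kap X J : R) : 0 < C1 -> 0 < kap -> 0 <= X -> 0 <= J ->
  (forall t, 0 < t -> t * X - t * C1 * powR t kap <= J) ->
  powR ((2 * C1)^-1) (kap^-1) / 2 * powR X (1 + kap^-1) <= J.
Proof.
move=> C0 k0 X0 J0 H.
have r0 : 1 + kap^-1 != 0 by rewrite gt_eqF // ltr_wpDr // invr_ge0 ltW.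
have [->|Xp] := eqVneq X 0.
  by rewrite powR0 // mulr0.
have Xp' : 0 < X by rewrite lt_neqAle eq_sym Xp X0.
set s := X * (2 * C1)^-1.
have s0 : 0 < s by rewrite mulr_gt0 // invr_gt0 mulr_gt0.
set t := powR s (kap^-1).
have t0 : 0 < t by rewrite powR_gt0.
have pt : powR t kap = s.
  by rewrite /t -powRrM mulVf ?gt_eqF // powRr1 // ltW.
have := H t t0; rewrite pt.
have -> : t * X - t * C1 * s = t * X / 2.
  have hg : C1 * (2 * C1)^-1 = 2^-1.
    by rewrite invfM mulrCA mulfV ?gt_eqF // mulr1.
  rewrite /s -(mulrA t C1) (mulrCA C1) hg; lra.
move=> h; apply: (le_trans _ h).
rewrite powRD; last by apply/implyP => hh; move: r0; rewrite (eqP hh).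
rewrite powRr1 // /t /s powRM //; last by rewrite invr_ge0 mulr_ge0 // ltW.
lra.
Qed.

Lemma final_alg (R : realType) (kap kap0 kp c m eps X Y J : R) :
  0 < kap -> 0 <= m -> 0 <= eps -> 0 <= X -> 0 <= Y -> 0 <= J ->
  kp * powR 2 (1 + kap^-1) = kap0 / 2 -> 0 <= kp ->
  kp * powR (2 * m) (1 + kap^-1) <= c ->
  kap0 * powR X (1 + kap^-1) <= J -> Y <= X + eps * m ->
  kp * powR Y (1 + kap^-1) <= J / 2 + c * (powR eps (kap^-1) * eps).
Proof.
move=> k0 m0 e0 X0 Y0 J0 hkp kp0 hc hJ hY.
set r := 1 + kap^-1 in hkp hc hJ *.
have r0 : 0 <= r by rewrite addr_ge0 // invr_ge0 ltW.
have pe : powR eps r = powR eps (kap^-1) * eps.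
  rewrite /r powRD; last by rewrite gt_eqF // ltr_wpDr // invr_ge0 ltW.
  by rewrite powRr1 // mulrC.
have hc0 : 0 <= c by apply: le_trans hc; rewrite mulr_ge0 // powR_ge0.
case: (leP (eps * m) X) => h.
- have : powR Y r <= powR (2 * X) r.
    apply: ge0_ler_powR => //; rewrite ?nnegrE ?mulr_ge0 //; lra.
  rewrite powRM // => hh.
  have hh2 := ler_wpM2l kp0 hh.
  have e1 : kp * (2 `^ r * X `^ r) = kap0 / 2 * X `^ r by rewrite mulrA hkp.
  have e2 : 0 <= c * (powR eps (kap^-1) * eps) by rewrite mulr_ge0 // mulr_ge0 // powR_ge0.
  lra.
- have : powR Y r <= powR (2 * m * eps) r.
    apply: ge0_ler_powR => //; rewrite ?nnegrE ?mulr_ge0 //; lra.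
  rewrite powRM ?mulr_ge0 // pe => hh.
  have hh2 := ler_wpM2l kp0 hh.
  have e1 : kp * ((2 * m) `^ r * (eps `^ kap^-1 * eps)) <= c * (eps `^ kap^-1 * eps).
    rewrite mulrA; apply: ler_wpM2r => //; by rewrite mulr_ge0 // powR_ge0.
  have e2 : 0 <= J / 2 by rewrite divr_ge0.
  lra.
Qed.

Unset Implicit Arguments.
Set Strict Implicit.

Theorem lemma4p13 (d : measure_display) (T : measurableType d) (R : realType)
  (mu : {measure set T -> \bar R}) (Om : set T)
  (alpha beta : T -> R)
  (phi : (T -> R) -> pert T R -> T -> R)
  (ebar : pert T R) (ubar : T -> R) (K varkappa sigma eta : R) :
  measurable Om -> (mu Om < +oo)%E ->
  in_Linf mu Om alpha -> in_Linf mu Om beta ->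
  {ae mu, forall x, Om x -> alpha x <= beta x} ->
  in_E mu Om ebar ->
  (* (A4) at ubar *)
  Uad mu Om alpha beta ebar ubar ->
  in_Linf mu Om (phi ubar ebar) ->
  (forall u, Uad mu Om alpha beta ebar u ->
     0 <= Rintegral mu Om (fun x => phi ubar ebar x * (u x - ubar x))) ->
  0 < K -> 0 < varkappa ->
  (forall eps : R, 0 < eps ->
     (mu [set x | Om x /\ (`|phi ubar ebar x| <= eps)%R] <= (K * powR eps varkappa)%:E)%E) ->
  (* box width *)
  0 < sigma ->
  {ae mu, forall x, Om x ->
     sigma <= beta x + e_be ebar x - (alpha x + e_al ebar x)} ->
  0 < eta -> eta < sigma / 4 ->
  exists c kappa' : R, 0 < c /\ 0 < kappa' /\
  forall (e : pert T R) (ue_bar : T -> R),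
    in_E mu Om e -> Edist mu Om e ebar < eta ->
    Uad mu Om alpha beta e ue_bar ->
    in_Linf mu Om (phi ue_bar e) ->
    (forall u, Uad mu Om alpha beta e u ->
       0 <= Rintegral mu Om (fun x => phi ue_bar e x * (u x - ue_bar x))) ->
    exists ue : T -> R,
      Uad mu Om alpha beta ebar ue /\
      Linf mu Om (ue_bar \- ue) <= Edist mu Om e ebar /\
      Rintegral mu Om (fun x => (phi ue_bar e x - phi ubar ebar x) * (ubar x - ue_bar x))
      >= kappa' * powR (L1norm mu Om (ue_bar \- ubar)) (1 + varkappa^-1)
         + 2^-1 * Rintegral mu Om (fun x => phi ubar ebar x * (ue x - ubar x))
         - c * (powR (Edist mu Om e ebar) (varkappa^-1)
                + Linf mu Om (phi ue_bar e \- phi ubar ebar)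
                + L1norm mu Om (ue_bar \- ubar)) * Edist mu Om e ebar.
Proof.
move=> mOm fin hal hbe hab hE hUb hpL VIb K0 kap0 meas sig0 hsig eta0 etas.
case: hE => hey heJ heal hebe.
have ha : in_Linf mu Om (fun x => alpha x + e_al ebar x) := inL_D hal heal.
have hb : in_Linf mu Om (fun x => beta x + e_be ebar x) := inL_D hbe hebe.
have [_ [Ma HMa]] := ha.
have [_ [Mb HMb]] := hb.
have mU : measurable_fun Om ubar.
  by apply/measurable_EFinP; exact: (measurable_int mu hUb.1).
have hU : in_Linf mu Om ubar := inL_sand mU ha hb hUb.2.
have hVI := VI_pw mOm fin ha hb hpL mU hUb.2
  (fun z hz bz => VIb z (conj (inL_int mOm fin hz) bz)).
pose Mbox := `|Ma| + `|Mb| + 1.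
have Mbox0 : 0 < Mbox by rewrite /Mbox ltr_pwDr // addr_ge0.
pose C1 := Mbox * K.
have C10 : 0 < C1 by rewrite mulr_gt0.
pose r := 1 + varkappa^-1.
pose kap0c := powR ((2 * C1)^-1) (varkappa^-1) / 2.
have kap0c0 : 0 < kap0c by rewrite divr_gt0 // powR_gt0 // invr_gt0 mulr_gt0.
have P0 : 0 < powR 2 r by rewrite powR_gt0.
pose kp := kap0c / (2 * powR 2 r).
have kp0 : 0 < kp by rewrite divr_gt0 // mulr_gt0.
have hkp : kp * powR 2 r = kap0c / 2.
  rewrite /kp invfM mulrA -mulrA [_^-1 * _]mulrC mulfV ?gt_eqF //.
  by rewrite mulr1.
pose m := fine (mu Om).
have m0 : 0 <= m by rewrite fine_ge0.
pose c := m + kp * powR (2 * m) r + 1.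
have c0 : 0 < c.
  by rewrite /c ltr_pwDr // addr_ge0 // mulr_ge0 // ?powR_ge0 // ltW.
exists c, kp; split => //; split => //.
move=> e w he hd hw hqL VIe.
case: he => hey' heJ' heal' hebe'.
have ha' : in_Linf mu Om (fun x => alpha x + e_al e x) := inL_D hal heal'.
have hb' : in_Linf mu Om (fun x => beta x + e_be e x) := inL_D hbe hebe'.
have mW : measurable_fun Om w.
  by apply/measurable_EFinP; exact: (measurable_int mu hw.1).
have hW : in_Linf mu Om w := inL_sand mW ha' hb' hw.2.
have [Da0 HDa] := Linf_ae (inL_B heal' heal).2.
have [Db0 HDb] := Linf_ae (inL_B hebe' hebe).2.
have [D0 HD] := Linf_ae (inL_B hqL hpL).2.
have Ly0 : 0 <= L2norm mu Om (e_y e \- e_y ebar) by apply: sqrtr_ge0.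
have LJ0 : 0 <= L2norm mu Om (e_J e \- e_J ebar) by apply: sqrtr_ge0.
pose eps := Edist mu Om e ebar.
have e0 : 0 <= eps by rewrite /eps /Edist; lra.
pose k := fun x => Num.max (- eps) (Num.min eps (ubar x - w x)).
have hk : in_Linf mu Om k.
  by apply: inL_max; [exact: inL_cst|apply: inL_min; [exact: inL_cst|exact: inL_B]].
pose v := fun x => w x + k x.
have hv : in_Linf mu Om v := inL_D hW hk.
pose z := fun x => ubar x - k x.
have hz : in_Linf mu Om z := inL_B hU hk.
have PW := aeOm2 hUb.2 (aeOm2 hw.2 (aeOm2 HDa (aeOm2 HDb (aeOm2 HD
   (aeOm2 hVI (aeOm2 HMa HMb)))))).
have PW2 : {ae mu, forall x, Om x ->
   [/\ alpha x + e_al ebar x <= v x <= beta x + e_be ebar x,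
       alpha x + e_al e x <= z x <= beta x + e_be e x,
       `|phi w e x - phi ubar ebar x| <= Linf mu Om (phi w e \- phi ubar ebar),
       `|phi ubar ebar x| * `|v x - ubar x| <= phi ubar ebar x * (v x - ubar x)
     & `|v x - ubar x| <= Mbox]}.
  apply: filterS PW => x H Ox.
  have [h1 [h2 [h3 [h4 [h5 [[h6 h6'] [h7 h8]]]]]]] := H Ox.
  have h3' : `|(alpha x + e_al e x) - (alpha x + e_al ebar x)| <= eps.
    move: h3 => /=; rewrite opprD addrACA subrr add0r addrC => h3.
    apply: le_trans h3 _; rewrite /eps /Edist; lra.
  have h4' : `|(beta x + e_be e x) - (beta x + e_be ebar x)| <= eps.
    move: h4 => /=; rewrite opprD addrACA subrr add0r addrC => h4.
    apply: le_trans h4 _; rewrite /eps /Edist; lra.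
  have [c1 c2 c3] := clamp_facts h1 h2 h3' h4'.
  have vb := c1; move: vb => /andP[vb1 vb2].
  move: h1 => /andP[ub1 ub2].
  split => //.
  - exact: pw_sign c1 h6 h6'.
  - move: h7 h8; rewrite !ler_norml => /andP[h7 h7'] /andP[h8 h8'].
    have := ler_norm Ma; have := ler_norm Mb.
    move=> n1 n2; apply/andP; split; rewrite /v /k /Mbox; lra.
have hp := hpL; have hq := hqL.
have iR1 : in_Linf mu Om (fun x => phi w e x * (z x - w x)) by apply: inL_M => //; exact: inL_B.
have iR2 : in_Linf mu Om (fun x => (phi w e x - phi ubar ebar x) * k x).
  by apply: inL_M => //; exact: inL_B.
have iR3 : in_Linf mu Om (fun x => phi ubar ebar x * (v x - ubar x)).
  by apply: inL_M => //; exact: inL_B.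
pose J := Rintegral mu Om (fun x => phi ubar ebar x * (v x - ubar x)).
have S1 : Rintegral mu Om (fun x => (phi w e x - phi ubar ebar x) * (ubar x - w x)) =
   Rintegral mu Om (fun x => phi w e x * (z x - w x))
   + Rintegral mu Om (fun x => (phi w e x - phi ubar ebar x) * k x) + J.
  rewrite /J -RintegralD //; [|exact: inL_int|exact: inL_int].
  rewrite -RintegralD //; [|apply: inL_int => //; exact: inL_D|exact: inL_int].
  apply: eq_Rintegral => x _; rewrite /z /v; lra.
have S2 : 0 <= Rintegral mu Om (fun x => phi w e x * (z x - w x)).
  apply: VIe; split; first exact: inL_int.
  by apply: filterS PW2 => x H Ox; have [] := H Ox.
have S3 : - (Linf mu Om (phi w e \- phi ubar ebar) * eps) * m <=
    Rintegral mu Om (fun x => (phi w e x - phi ubar ebar x) * k x).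
  rewrite -Rintegral_cst //; apply: ae_le_Rint => //; first exact: inL_cst.
  apply: filterS PW2 => x H Ox; have [_ _ h _ _] := H Ox.
  have hk' : `|k x| <= eps by apply: clamp_abs.
  have : `|(phi w e x - phi ubar ebar x) * k x| <= Linf mu Om (phi w e \- phi ubar ebar) * eps.
    by rewrite normrM ler_pM.
  by rewrite ler_norml => /andP[].
have S4 : 0 <= J.
  have := ae_le_Rint mOm fin (inL_cst mu Om 0) iR3.
  rewrite Rintegral_cst // mul0r; apply.
  apply: filterS PW2 => x H Ox; have [_ _ _ h _] := H Ox.
  exact: le_trans h.
pose X := Rintegral mu Om (fun x => `|v x - ubar x|).
have X0 : 0 <= X by apply: Rintegral_ge0.
have S5 : kap0c * powR X r <= J.
  apply: (growth_pow C10 kap0 X0 S4) => t t0.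
  have := growth (K := K) (kap := varkappa) mOm fin hp hv hU t0 (ltW Mbox0) _ (meas t t0).
  move=> h; rewrite /C1 !mulrA; rewrite !mulrA in h; apply: h.
  by apply: filterS PW2 => x H Ox; have [_ _ _ h1 h2] := H Ox.
have eY : L1norm mu Om (w \- ubar) = Rintegral mu Om (fun x => `|w x - ubar x|) by [].
pose Y := Rintegral mu Om (fun x => `|w x - ubar x|).
have Y0 : 0 <= Y by apply: Rintegral_ge0.
have S6 : Y <= X + eps * m.
  have hvu : in_Linf mu Om (fun x => `|v x - ubar x|) by apply: inL_abs; exact: inL_B.
  have hh : {ae mu, forall x, Om x -> `|w x - ubar x| <= `|v x - ubar x| + eps}.
    apply: aeW => x Ox.
    have hk' : `|k x| <= eps by apply: clamp_abs.
    have -> : w x - ubar x = (v x - ubar x) + (- k x) by rewrite /v; lra.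
    by apply: le_trans (ler_normD _ _) _; rewrite normrN lerD2l.
  have := ae_le_Rint mOm fin (inL_abs (inL_B hW hU)) (inL_D hvu (inL_cst mu Om eps)) hh.
  rewrite RintegralD //; [|exact: inL_int|apply: inL_int => //; exact: inL_cst].
  by rewrite Rintegral_cst.
have S7 : kp * powR Y r <= J / 2 + c * (powR eps (varkappa^-1) * eps).
  apply: (final_alg kap0 m0 e0 X0 Y0 S4 hkp (ltW kp0) _ S5 S6).
  by rewrite /c; lra.
exists v; split.
  split; first exact: inL_int.
  by apply: filterS PW2 => x H Ox; have [] := H Ox.
split.
  apply: Linf_le => // x Ox /=.
  have -> : w x - v x = - k x by rewrite /v; lra.
  by rewrite normrN clamp_abs.
rewrite -/eps eY -/Y -/J S1.
have f1 : m * (Linf mu Om (phi w e \- phi ubar ebar) * eps)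
    <= c * (Linf mu Om (phi w e \- phi ubar ebar) * eps).
  by apply: ler_wpM2r; [rewrite mulr_ge0|rewrite /c; have := powR_ge0 (2 * m) r; 
     have := ltW kp0; move=> *; nra].
have f2 : 0 <= c * (Y * eps) by rewrite mulr_ge0 // ?mulr_ge0 // ltW.
lra.
Qed.
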